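(* Let $n\ge3$ be an integer, let $(\eta_{ab})$ be a non-degenerate symmetric complex $n\times n$ matrix with inverse $(\eta^{ab})$, let $\mathscr{F}=\mathbb{C}[x^1,\dots,x^n]$ and $\mathscr{F}^+=\{\phi\in\mathscr{F}:\sum_{a,b}\eta^{ab}\partial_a\partial_b\phi=0\}$. Let $Z^\circ$ be the $\mathbb{C}$-algebra of operators on $\mathscr{F}$ generated by $$H=-\tfrac12\sum_a(x^a\partial_a+\partial_ax^a),\qquad \partial_a,\qquad \tilde x^a=x^a+\frac1{2H+4}\sum_{b,c}\eta_{bc}x^bx^c\,\partial^a\qquad(1\le a\le n).$$ Then each of these operators maps $\mathscr{F}^+$ into itself, so $\mathscr{F}^+$ is a $Z^\circ$-module, and $\mathscr{F}^+$ is irreducible as a $Z^\circ$-module.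
   Context: $\partial_a=\partial/\partial x^a$, $\partial^a=\sum_b\eta^{ab}\partial_b$. $H$ acts on homogeneous polynomials of degree $d$ by the scalar $-d-\frac n2$, and $(2H+4)^{-1}$ denotes the inverse of $2H+4$ on the (homogeneous, degree $\ge2$ when nonzero) polynomial $\sum_{b,c}\eta_{bc}x^bx^c\partial^a\psi$; explicitly $\tilde x^a\psi=x^a\psi+\frac1{2-2d-n}\sum_{b,c}\eta_{bc}x^bx^c\partial^a\psi$ for $\psi$ homogeneous of degree $d\ge1$ and $\tilde x^a\psi=x^a\psi$ for constant $\psi$. Irreducible means the only $Z^\circ$-invariant subspaces of $\mathscr{F}^+$ are $0$ and $\mathscr{F}^+$. *)

(* Defs.v *)
From HB Require Import structures.
From mathcomp Require Import all_boot all_order all_algebra.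
From mathcomp Require Import Rstruct.
From mathcomp.real_closed Require Import complex.
From mathcomp.multinomials Require Import mpoly.
Set Implicit Arguments. Unset Strict Implicit. Unset Printing Implicit Defensive.
Import Order.TTheory GRing.Theory Num.Theory.
Local Open Scope ring_scope.

Notation C := (complex Rdefinitions.R).
Check (1 : C).

Definition Fpoly (n : nat) := {mpoly C[n]}.

Section Ops.
Variables (n : nat) (eta : 'M[C]_n).

Definition etainv : 'M[C]_n := invmx eta.

Definition dpart (a : 'I_n) (p : Fpoly n) : Fpoly n := mderiv a p.

Definition dup (a : 'I_n) (p : Fpoly n) : Fpoly n :=
  \sum_(b < n) etainv a b *: dpart b p.

Definition laplace (p : Fpoly n) : Fpoly n :=
  \sum_(a < n) \sum_(b < n) etainv a b *: dpart a (dpart b p).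

Definition harmonic (p : Fpoly n) : Prop := laplace p = 0.

Definition Hop (p : Fpoly n) : Fpoly n :=
  (- (1 / 2%:R)) *: \sum_(a < n) ('X_a * dpart a p + dpart a ('X_a * p)).

(* (2H+4)^{-1}: H acts on degree-d homogeneous polynomials by -d - n/2,
   so on each monomial of degree d we divide by 2(-d-n/2)+4. *)
Definition inv2H4 (p : Fpoly n) : Fpoly n :=
  \sum_(m <- msupp p)
     (p@_m / (2%:R * (- (mdeg m)%:R - n%:R / 2%:R) + 4%:R)) *: 'X_[m].

Definition xtilde (a : 'I_n) (p : Fpoly n) : Fpoly n :=
  'X_a * p + inv2H4 (\sum_(b < n) \sum_(c < n) eta b c *: ('X_b * 'X_c * dup a p)).

Inductive inZ : (Fpoly n -> Fpoly n) -> Prop :=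
  | inZ_H : inZ Hop
  | inZ_d a : inZ (dpart a)
  | inZ_xt a : inZ (xtilde a)
  | inZ_id : inZ id
  | inZ_scale (c : C) T : inZ T -> inZ (fun p => c *: T p)
  | inZ_add T1 T2 : inZ T1 -> inZ T2 -> inZ (fun p => T1 p + T2 p)
  | inZ_comp T1 T2 : inZ T1 -> inZ T2 -> inZ (fun p => T1 (T2 p)).

Definition Zinvariant_subspace (S : Fpoly n -> Prop) : Prop :=
  [/\ S 0,
      (forall p q, S p -> S q -> S (p + q)),
      (forall (c : C) p, S p -> S (c *: p)),
      (forall p, S p -> harmonic p)
    & (forall T p, inZ T -> S p -> S (T p))].

Definition Fplus_irreducible : Prop :=
  forall S, Zinvariant_subspace S ->
    (forall p, S p <-> p = 0) \/ (forall p, S p <-> harmonic p).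

End Ops.

(* Main.v *)
Require Import Defs.
From HB Require Import structures.
From mathcomp Require Import all_boot all_order all_algebra.
From mathcomp Require Import Rstruct.
From mathcomp.real_closed Require Import complex.
From mathcomp.multinomials Require Import mpoly.
From mathcomp.zify Require Import zify.
From mathcomp.algebra_tactics Require Import ring.
Set Implicit Arguments. Unset Strict Implicit. Unset Printing Implicit Defensive.
Import Order.TTheory GRing.Theory Num.Theory.
Local Open Scope ring_scope.

Section S.
Variable n : nat.
Local Notation P := (Fpoly n).
Implicit Types (a b : 'I_n) (p q : P).

Lemma mcoeff_sum (I : Type) (r : seq I) (Q : pred I) (F : I -> P) m :
  (\sum_(i <- r | Q i) F i)@_m = \sum_(i <- r | Q i) (F i)@_m.
Proof. exact: (@raddf_sum _ _ (mcoeff m)). Qed.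

Definition scale (f : nat -> C) (p : P) : P :=
  \sum_(m <- msupp p) (p@_m * f (mdeg m)) *: 'X_[m].

Lemma mcoeff_scale f p m : (scale f p)@_m = p@_m * f (mdeg m).
Proof.
rewrite /scale mcoeff_sum.
under eq_bigr do rewrite mcoeffZ mcoeffX.
case: (boolP (m \in msupp p)) => hm.
  rewrite (bigD1_seq m) ?msupp_uniq //= eqxx mulr1 big1 ?addr0 // => k /negbTE ->.
  by rewrite mulr0.
rewrite (memN_msupp_eq0 hm) mul0r big1_seq // => k /andP[_ hk].
by case: eqP hm => [<-|_]; [rewrite hk | rewrite mulr0].
Qed.
Lemma mcoeffXiM (a : 'I_n) (q : P) m :
  ('X_a * q)@_m = if (0 < m a)%N then q@_(m - U_(a))%MM else 0.
Proof.
have -> : 'X_a * q = q * 'X_[U_(a)] by rewrite commr_mpolyX.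
case: ifP => ha.
  have hle : (U_(a) <= m)%MM.
    by apply/mnm_lepP => l; rewrite mnm1E; case: eqP => // <-.
  by rewrite -{1}(submK hle) addmC mcoeffMX.
rewrite [q]mpolyE mulr_suml mcoeff_sum big1 // => k _.
rewrite -scalerAl -mpolyXD mcoeffZ mcoeffX.
case: (@eqP _ (k + U_(a))%MM m) => [e|]; last by rewrite mulr0.
by move: ha; rewrite -e mnmDE mnm1E eqxx addn1.
Qed.

Lemma scale_ext f g p : (forall d, f d = g d) -> scale f p = scale g p.
Proof. by move=> e; apply/mpolyP=> m; rewrite !mcoeff_scale e. Qed.
Lemma scaleD f p q : scale f (p + q) = scale f p + scale f q.
Proof. by apply/mpolyP=> m; rewrite mcoeffD !mcoeff_scale mcoeffD mulrDl. Qed.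
Lemma scaleZ f c p : scale f (c *: p) = c *: scale f p.
Proof. by apply/mpolyP=> m; rewrite mcoeffZ !mcoeff_scale mcoeffZ mulrA. Qed.
Lemma scale0 f : scale f 0 = 0.
Proof. by apply/mpolyP=> m; rewrite mcoeff_scale mcoeff0 mul0r. Qed.
Lemma scale_sum f (I : Type) (r : seq I) (Q : pred I) (F : I -> P) :
  scale f (\sum_(i <- r | Q i) F i) = \sum_(i <- r | Q i) scale f (F i).
Proof.
by apply/mpolyP=> m; rewrite mcoeff_scale !mcoeff_sum mulr_suml;
  apply: eq_bigr => i _; rewrite mcoeff_scale.
Qed.
Lemma scale_comp f g p : scale f (scale g p) = scale (fun d => g d * f d) p.
Proof. by apply/mpolyP=> m; rewrite !mcoeff_scale mulrA. Qed.
Lemma scale_const c p : scale (fun _ => c) p = c *: p.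
Proof. by apply/mpolyP=> m; rewrite mcoeff_scale mcoeffZ mulrC. Qed.

Lemma dpartD a p q : dpart a (p + q) = dpart a p + dpart a q.
Proof. exact: mderivD. Qed.
Lemma dpartZ a c p : dpart a (c *: p) = c *: dpart a p.
Proof. exact: mderivZ. Qed.
Lemma dpart0 a : dpart a (0 : P) = 0.
Proof. exact: mderiv0. Qed.
Lemma dpart_sum a (I : Type) (r : seq I) (Q : pred I) (F : I -> P) :
  dpart a (\sum_(i <- r | Q i) F i) = \sum_(i <- r | Q i) dpart a (F i).
Proof. exact: (@raddf_sum _ _ (mderiv a)). Qed.
Lemma dpart_comm a b p : dpart a (dpart b p) = dpart b (dpart a p).
Proof. exact: mderiv_comm. Qed.
Lemma mcoeff_dpart a p m : (dpart a p)@_m = p@_(m + U_(a))%MM *+ (m a).+1.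
Proof. exact: mcoeff_mderiv. Qed.

Lemma dpart_scale b f q :
  dpart b (scale f q) = scale (fun d => f d.+1) (dpart b q).
Proof.
apply/mpolyP=> m; rewrite mcoeff_dpart !mcoeff_scale mcoeff_dpart.
by rewrite mdegD mdeg1 addn1 mulrnAl.
Qed.

Lemma dpart_X a b p :
  dpart b ('X_a * p) = (a == b)%:R *: p + 'X_a * dpart b p.
Proof.
rewrite /dpart mderivM mderivX mnm1E; congr (_ + _).
case: (eqVneq a b) => [->|_]; last by rewrite !scale0r mul0r.
have -> : (U_(b) - U_(b))%MM = 0%MM by apply/mnmP => i; rewrite mnmBE subnn mnm0E.
by rewrite mpolyX0 -scalerAl mul1r.
Qed.

Definition Eop (p : P) : P := \sum_(a < n) 'X_a * dpart a p.

Lemma Eop_scale p : Eop p = scale (fun d => d%:R) p.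
Proof.
apply/mpolyP=> m; rewrite mcoeff_scale /Eop mcoeff_sum.
have -> : \sum_(a < n) ('X_a * dpart a p)@_m = \sum_(a < n) p@_m *+ m a.
  apply: eq_bigr => a _; rewrite mcoeffXiM.
  case: ifP => ha; last by move: ha; rewrite lt0n => /negbFE/eqP ->.
  have hle : (U_(a) <= m)%MM.
    by apply/mnm_lepP => l; rewrite mnm1E; case: eqP => // <-.
  rewrite mcoeff_dpart submK // mnmBE mnm1E eqxx subn1 prednK //.
by rewrite sumrMnr -mdegE mulr_natr.
Qed.

Lemma scale_add f g p : scale f p + scale g p = scale (fun d => f d + g d) p.
Proof. by apply/mpolyP=> m; rewrite mcoeffD !mcoeff_scale mulrDr. Qed.

Variable eta : 'M[C]_n.
Hypothesis eta_symm : eta^T = eta.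
Hypothesis eta_unit : eta \in unitmx.
Local Notation ei := (etainv eta).
Local Notation dup := (dup eta).
Local Notation lap := (laplace eta).

Lemma ei_sym a b : ei a b = ei b a.
Proof.
have e : (invmx eta)^T = invmx eta by rewrite trmx_inv eta_symm.
by rewrite /etainv -{1}e mxE.
Qed.
Lemma eta_sym a b : eta a b = eta b a.
Proof. by rewrite -{1}eta_symm mxE. Qed.
Lemma eta_ei b e : \sum_c eta b c * ei c e = (b == e)%:R.
Proof.
have := congr1 (fun M : 'M_n => M b e) (mulmxV eta_unit).
by rewrite !mxE.
Qed.

Lemma dupD a p q : dup a (p + q) = dup a p + dup a q.
Proof. by rewrite /Defs.dup -big_split; apply: eq_bigr => b _; rewrite dpartD scalerDr. Qed.
Lemma dupZ a c p : dup a (c *: p) = c *: dup a p.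
Proof.
rewrite /Defs.dup scaler_sumr; apply: eq_bigr => b _.
by rewrite dpartZ !scalerA mulrC.
Qed.
Lemma lapD p q : lap (p + q) = lap p + lap q.
Proof.
rewrite /laplace -big_split; apply: eq_bigr => a _.
rewrite -big_split; apply: eq_bigr => b _; by rewrite !dpartD scalerDr.
Qed.
Lemma lapZ c p : lap (c *: p) = c *: lap p.
Proof.
rewrite /laplace scaler_sumr; apply: eq_bigr => a _.
rewrite scaler_sumr; apply: eq_bigr => b _.
by rewrite !dpartZ !scalerA mulrC.
Qed.
Lemma lap0 : lap 0 = 0.
Proof. by have := lapZ 0 0; rewrite !scale0r. Qed.
Lemma lap_sum (I : Type) (r : seq I) (Q : pred I) (F : I -> P) :
  lap (\sum_(i <- r | Q i) F i) = \sum_(i <- r | Q i) lap (F i).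
Proof.
elim/big_rec2: _ => [|i y1 y2 _ <-]; first exact: lap0.
by rewrite lapD.
Qed.
Lemma dup0 a : dup a 0 = 0.
Proof. by have := dupZ a 0 0; rewrite !scale0r. Qed.
Lemma dup_sum a (I : Type) (r : seq I) (Q : pred I) (F : I -> P) :
  dup a (\sum_(i <- r | Q i) F i) = \sum_(i <- r | Q i) dup a (F i).
Proof.
elim/big_rec2: _ => [|i y1 y2 _ <-]; first exact: dup0.
by rewrite dupD.
Qed.

Lemma lap_dpart a p : lap (dpart a p) = dpart a (lap p).
Proof.
rewrite /laplace dpart_sum; apply: eq_bigr => b _.
rewrite dpart_sum; apply: eq_bigr => c _.
by rewrite dpartZ (dpart_comm c a) (dpart_comm b a).
Qed.
Lemma lap_dup a p : lap (dup a p) = dup a (lap p).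
Proof.
rewrite /Defs.dup lap_sum; apply: eq_bigr => b _.
by rewrite lapZ lap_dpart.
Qed.
Lemma lap_as1 p : lap p = \sum_a dpart a (dup a p).
Proof.
rewrite /laplace; apply: eq_bigr => a _; rewrite /Defs.dup dpart_sum; apply: eq_bigr => b _.
by rewrite dpartZ.
Qed.
Lemma lap_as2 p : lap p = \sum_a dup a (dpart a p).
Proof.
rewrite /laplace exchange_big; apply: eq_bigr => b _; apply: eq_bigr => a _.
by rewrite ei_sym.
Qed.
Lemma lap_scale f q : lap (scale f q) = scale (fun d => f d.+2) (lap q).
Proof.
rewrite /laplace scale_sum; apply: eq_bigr => a _.
rewrite scale_sum; apply: eq_bigr => b _.
by rewrite scaleZ !dpart_scale.
Qed.

Lemma dup_X b c q : dup b ('X_c * q) = ei b c *: q + 'X_c * dup b q.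
Proof.
rewrite /Defs.dup.
under eq_bigr do rewrite dpart_X scalerDr scalerA.
rewrite big_split /= mulr_sumr; congr (_ + _).
  rewrite (bigD1 c) //= eqxx mulr1 big1 ?addr0 // => e /negbTE.
  by rewrite eq_sym => ->; rewrite mulr0 scale0r.
by apply: eq_bigr => e _; rewrite scalerAr.
Qed.

Lemma lap_X a p : lap ('X_a * p) = 'X_a * lap p + 2%:R *: dup a p.
Proof.
rewrite lap_as1.
under eq_bigr do rewrite dup_X dpartD dpart_X dpartZ.
rewrite big_split /= big_split /= -mulr_sumr -lap_as1.
have -> : \sum_(i < n) ei i a *: dpart i p = dup a p.
  by apply: eq_bigr => b _; rewrite ei_sym.
rewrite (bigD1 a) //= eqxx scale1r big1 ?addr0; last first.
  by move=> e /negbTE; rewrite eq_sym => ->; rewrite scale0r.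
by rewrite scaler_nat mulr2n addrA addrC.
Qed.

Lemma sum_eta_dup b p : \sum_c eta b c *: dup c p = dpart b p.
Proof.
rewrite /Defs.dup.
under eq_bigr do rewrite scaler_sumr.
rewrite exchange_big /=.
under eq_bigr do (under eq_bigr do rewrite scalerA; rewrite -scaler_suml eta_ei).
rewrite (bigD1 b) //= eqxx scale1r big1 ?addr0 // => e /negbTE.
by rewrite eq_sym => ->; rewrite scale0r.
Qed.

Lemma trace_eta : \sum_b \sum_c eta b c * ei b c = n%:R.
Proof.
under eq_bigr do under eq_bigr do rewrite ei_sym.
under eq_bigr do rewrite eta_ei eqxx.
by rewrite sumr_const card_ord.
Qed.

Lemma lap_R p : lap p = 0 ->
  lap (\sum_b \sum_c eta b c *: ('X_b * 'X_c * p)) =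
  2%:R *: (Eop p + n%:R *: p + Eop p).
Proof.
move=> hp.
rewrite lap_sum.
under eq_bigr do rewrite lap_sum.
under eq_bigr do under eq_bigr do rewrite lapZ -mulrA lap_X lap_X hp mulr0 add0r dup_X.
have step : forall b c, eta b c *: ('X_b * (2%:R *: dup c p) + 2%:R *: (ei b c *: p + 'X_c * dup b p))
   = 2%:R *: (eta b c *: ('X_b * dup c p) + (eta b c * ei b c) *: p + eta b c *: ('X_c * dup b p)).
  move=> b c; rewrite -scalerAr !scalerDr !scalerA.
  by rewrite addrA [eta b c * 2]mulrC !mulrA.
under eq_bigr do under eq_bigr do rewrite step.
under eq_bigr do rewrite -scaler_sumr.
rewrite -scaler_sumr; congr (_ *: _).
under eq_bigr do rewrite big_split /= big_split /=.
rewrite big_split /= big_split /=.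
congr (_ + _ + _).
- apply: eq_bigr => b _; rewrite -sum_eta_dup mulr_sumr.
  by apply: eq_bigr => c _; rewrite scalerAr.
- by rewrite -trace_eta scaler_suml; apply: eq_bigr => b _; rewrite scaler_suml.
- rewrite exchange_big /=; apply: eq_bigr => c _; rewrite -sum_eta_dup mulr_sumr.
  by apply: eq_bigr => b _; rewrite scalerAr eta_sym.
Qed.

Lemma harm_dpart a p : harmonic eta p -> harmonic eta (dpart a p).
Proof. by rewrite /harmonic lap_dpart => ->; rewrite dpart0. Qed.

Lemma harm_H p : harmonic eta p -> harmonic eta (Hop p).
Proof.
rewrite /harmonic /Hop => hp; rewrite lapZ lap_sum.
under eq_bigr do rewrite lapD lap_X lap_dpart hp dpart0 mulr0 add0r lap_dpart lap_X hp mulr0 add0r dpartZ.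
by rewrite big_split /= -!scaler_sumr -lap_as2 -lap_as1 hp !scaler0 addr0 scaler0.
Qed.

Definition gden (d : nat) : C := (2%:R * (- d%:R - n%:R / 2%:R) + 4%:R)^-1.
Lemma inv2H4E q : inv2H4 q = scale gden q.
Proof. by []. Qed.

Hypothesis n3 : (3 <= n)%N.

Lemma gden_val d : (d%:R + n%:R + d%:R) * gden d.+2 = -1.
Proof.
rewrite /gden -addn2 natrD.
have h2 : (2%:R : C) != 0 by rewrite pnatr_eq0.
have hx : (d%:R + n%:R + d%:R : C) != 0.
  rewrite -!natrD pnatr_eq0; apply/eqP; lia.
have e : (2%:R * (- (d%:R + 2%:R) - n%:R / 2%:R) + 4%:R : C) = - (d%:R + n%:R + d%:R).
  by field.
have hd : (2%:R * (- (d%:R + 2%:R) - n%:R / 2%:R) + 4%:R : C) != 0 by rewrite e oppr_eq0.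
field.
have -> : (- (2%:R + d%:R) * 2%:R - n%:R + 4%:R : C) = - (d%:R + n%:R + d%:R) by ring.
by rewrite oppr_eq0.
Qed.

Lemma harm_xt a p : harmonic eta p -> harmonic eta (xtilde eta a p).
Proof.
rewrite /harmonic /xtilde => hp.
have hphi : lap (dup a p) = 0 by rewrite lap_dup hp dup0.
rewrite lapD lap_X hp mulr0 add0r inv2H4E lap_scale lap_R // scaleZ.
rewrite !Eop_scale -(scale_const n%:R) !scale_add scale_comp /=.
rewrite (@scale_ext _ (fun _ => -1)); last by move=> d; rewrite gden_val.
by rewrite scale_const scaleN1r scalerN subrr.
Qed.

Definition comp d q := scale (fun e => (e == d)%:R) q.

Lemma sum_ind x K : \sum_(d < K) ((x == d :> nat)%:R : C) = (x < K)%:R.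
Proof.
elim: K => [|K IH]; first by rewrite big_ord0.
rewrite big_ord_recr /= IH [in RHS]ltnS [in RHS]leq_eqVlt.
by case: ltngtP => h; rewrite ?addr0 ?add0r.
Qed.

Lemma decomp p : p = \sum_(d < msize p) comp d p.
Proof.
apply/mpolyP => m; rewrite mcoeff_sum.
under eq_bigr do rewrite mcoeff_scale.
rewrite -mulr_sumr sum_ind.
case: ltnP => h; first by rewrite mulr1.
by rewrite mulr0 memN_msupp_eq0 // msize_mdeg_ge.
Qed.

Lemma comp0 q : comp 0 q = q@_0%MM *: 1.
Proof.
apply/mpolyP => m; rewrite mcoeff_scale mcoeffZ mcoeff1 mdeg_eq0.
by case: eqP => [->|]; rewrite ?mulr1 ?mulr0.
Qed.

Lemma Eop_comp d q : Eop (comp d q) = d%:R *: comp d q.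
Proof.
apply/mpolyP => m; rewrite Eop_scale mcoeffZ !mcoeff_scale.
by case: eqP => [->|]; rewrite ?mulr1 ?mulr0 ?mul0r // mulrC.
Qed.

Lemma dpart_comp a d q : dpart a (comp d.+1 q) = comp d (dpart a q).
Proof. by rewrite dpart_scale. Qed.

Lemma lap_comp d q : harmonic eta q -> lap (comp d q) = 0.
Proof. by rewrite /harmonic lap_scale => ->; rewrite scale0. Qed.

Lemma xt_sum h : lap h = 0 -> \sum_a xtilde eta a (dpart a h) = Eop h.
Proof.
move=> hh; rewrite /xtilde big_split /=.
rewrite -[RHS]addr0; congr (_ + _).
under eq_bigr do rewrite inv2H4E.
rewrite -scale_sum -[RHS](scale0 gden); congr (scale _ _).
rewrite exchange_big /=.
under eq_bigr do rewrite exchange_big /=.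
rewrite big1 // => b _; rewrite big1 // => c _.
by rewrite -scaler_sumr -mulr_sumr -lap_as2 hh mulr0 scaler0.
Qed.

Lemma reach1 (S : P -> Prop) :
  (forall a p, S p -> S (dpart a p)) -> (forall c p, S p -> S (c *: p)) ->
  forall p, S p -> p != 0 -> S 1.
Proof.
move=> Sd SZ.
suff H : forall k p, (forall m, m \in msupp p -> (mdeg m < k)%N) -> S p -> p != 0 -> S 1.
  by move=> p; apply: (H (msize p)) => m; apply: msize_mdeg_lt.
elim => [|k IH] p hb hS hnz.
  case e: (msupp p) => [|m s]; first by move/eqP: e; rewrite msupp_eq0 (negbTE hnz).
  by have := hb m; rewrite e inE eqxx ltn0 => /(_ isT).
case hh: (has (fun m => (0 < mdeg m)%N) (msupp p)).
  case/hasP: hh => m hm hdeg.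
  have [a ha] : exists a, (0 < m a)%N.
    case: (pickP (fun i : 'I_n => (0 < m i)%N)) => [a ha|hn]; first by exists a.
    move: hdeg; rewrite mdegE big1 // => i _; move: (hn i) => /= /negbT.
    by rewrite lt0n negbK => /eqP.
  have hle : (U_(a) <= m)%MM.
    by apply/mnm_lepP => l; rewrite mnm1E; case: eqP => // <-.
  apply: (IH (dpart a p)); last 1 first.
  - apply/eqP => /mpolyP /(_ (m - U_(a))%MM).
    rewrite mcoeff_dpart submK // mcoeff0 mnmBE mnm1E eqxx subn1 prednK //.
    by move/eqP; rewrite mulrn_eq0 eqn0Ngt ha /= mcoeff_eq0 hm.
  - move=> m' hm'; have : (m' + U_(a))%MM \in msupp p.
      move: hm'; rewrite !mcoeff_msupp mcoeff_dpart; apply: contra => /eqP ->.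
      by rewrite mul0rn.
    by move/hb; rewrite mdegD mdeg1 addn1 ltnS.
  - exact: Sd.
have hp : p = p@_0%MM *: 1.
  apply/mpolyP => m; rewrite mcoeffZ mcoeff1.
  case: (eqVneq m 0%MM) => [->|hm]; first by rewrite mulr1.
  rewrite mulr0 memN_msupp_eq0 //; apply/negP => hin.
  move/negbT: hh; rewrite -all_predC => /allP /(_ m hin) /=.
  by rewrite lt0n mdeg_eq0 hm.
have h0 : p@_0%MM != 0.
  by apply: contra hnz => /eqP h0; rewrite hp h0 scale0r.
have := SZ (p@_0%MM)^-1 _ hS; rewrite {2}hp scalerA mulVf // scale1r.
by [].
Qed.

End S.

From Stdlib Require Import Classical.

Theorem mainTheorem10 (n : nat) (eta : 'M[C]_n) :
  (3 <= n)%N -> eta^T = eta -> eta \in unitmx ->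
  [/\ (forall p, harmonic eta p -> harmonic eta (Hop p)),
      (forall a p, harmonic eta p -> harmonic eta (dpart a p)),
      (forall a p, harmonic eta p -> harmonic eta (xtilde eta a p))
    & Fplus_irreducible eta].
Proof.
move=> n3 hs hu; split.
- by move=> p hp; apply: harm_H.
- by move=> a p hp; apply: harm_dpart.
- by move=> a p hp; apply: harm_xt.
move=> S [S0 Sadd SZ Sh Sinv].
case: (classic (exists p, S p /\ p <> 0)) => [[p0 [hp0 hnz]]|hno]; last first.
  left => p; split => [hp|->//].
  by case: (eqVneq p 0) => // hne; case: hno; exists p; split => //; apply/eqP.
right => p; split => [|hp]; first exact: Sh.
have S1 : S 1.
  apply: (@reach1 n S _ SZ p0 hp0); last by apply/eqP.
  by move=> a q hq; exact: (Sinv _ _ (inZ_d eta a) hq).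
have Ssum : forall K (F : 'I_K -> Fpoly n), (forall i, S (F i)) -> S (\sum_i F i).
  move=> K F hF; elim/big_rec: _ => // i x _ hx; exact: Sadd.
have Hc : forall d q, harmonic eta q -> S (comp d q).
  elim => [|d IH] q hq; first by rewrite comp0; apply: SZ.
  have hE : S (Eop (comp d.+1 q)).
    rewrite -(xt_sum hs); last exact: lap_comp.
    apply: Ssum => a; apply: (Sinv _ _ (inZ_xt eta a)); rewrite dpart_comp.
    by apply: IH; apply: harm_dpart.
  rewrite Eop_comp in hE.
  have := SZ ((d.+1)%:R)^-1 _ hE; rewrite scalerA mulVf ?scale1r //.
  by rewrite pnatr_eq0.
rewrite (decomp p); apply: Ssum => i; exact: Hc.
Qed.
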